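(* Let $R$ be a ring with no right subinjective middle class. Then every right $R$-module is subinjective extension-reflecting.
   Context: For right $R$-modules $X,Y$, $X\in \underline{\mathfrak{In}}^{-1}(Y)$ means: for every module $C$ containing $X$ as a submodule, every homomorphism $X\to Y$ extends to $C\to Y$; $\underline{\mathfrak{In}}^{-1}(Y)$ is the class of all such $X$. A module $N$ is indigent if $\underline{\mathfrak{In}}^{-1}(N)$ equals the class of injective modules. $R$ has no right subinjective middle class if every right $R$-module is either injective or indigent. $M$ is subinjective extension-reflecting if for every short exact sequence $0\to A\to B\to C\to 0$, $M\in \underline{\mathfrak{In}}^{-1}(A)\cap \underline{\mathfrak{In}}^{-1}(C)$ implies $M\in \underline{\mathfrak{In}}^{-1}(B)$. *)

(* Defs.v *)
(* Right R-modules are modelled as left modules over the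
   converse ring R^c (lmodType R^c). *)
From HB Require Import structures.
From mathcomp Require Import all_boot all_algebra.
Set Implicit Arguments. Unset Strict Implicit. Unset Printing Implicit Defensive.
Import GRing.Theory.
Local Open Scope ring_scope.

Section ModDefs.
Variable S : pzRingType.

Definition is_hom (X Y : lmodType S) (f : X -> Y) : Prop :=
  forall (a : S) (x y : X), f (a *: x + y) = a *: f x + f y.

Definition is_mono (X C : lmodType S) (i : X -> C) : Prop :=
  is_hom i /\ injective i.

Definition subinj (X Y : lmodType S) : Prop :=
  forall (C : lmodType S) (i : X -> C), is_mono i ->
  forall f : X -> Y, is_hom f ->
  exists g : C -> Y, is_hom g /\ (forall x, g (i x) = f x).

Definition injective_mod (M : lmodType S) : Prop :=
  forall (A B : lmodType S) (i : A -> B), is_mono i ->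
  forall f : A -> M, is_hom f ->
  exists g : B -> M, is_hom g /\ (forall a, g (i a) = f a).

Definition indigent (N : lmodType S) : Prop :=
  forall X : lmodType S, subinj X N <-> injective_mod X.

Definition no_subinj_middle_class : Prop :=
  forall M : lmodType S, injective_mod M \/ indigent M.

Definition short_exact (A B C : lmodType S) (f : A -> B) (g : B -> C) : Prop :=
  [/\ is_mono f, is_hom g, (forall c, exists b, g b = c) &
      (forall b, g b = 0 <-> exists a, f a = b)].

Definition subinj_ext_reflecting (M : lmodType S) : Prop :=
  forall (A B C : lmodType S) (f : A -> B) (g : B -> C), short_exact f g ->
  subinj M A -> subinj M C -> subinj M B.

End ModDefs.

(* Main.v *)
Require Import Defs.
From HB Require Import structures.
From mathcomp Require Import all_boot all_algebra.
From Stdlib Require Import IndefiniteDescription.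
Set Implicit Arguments. Unset Strict Implicit. Unset Printing Implicit Defensive.
Import GRing.Theory.
Local Open Scope ring_scope.

Section Aux.
Variable S : pzRingType.

Lemma hom0 (X Y : lmodType S) (f : X -> Y) : is_hom f -> f 0 = 0.
Proof.
move=> hf; have := hf 1 0 0; rewrite !scale1r addr0 => e.
by apply: (addrI (f 0)); rewrite addr0 -e.
Qed.

Lemma homD (X Y : lmodType S) (f : X -> Y) : is_hom f -> forall x y, f (x + y) = f x + f y.
Proof. by move=> hf x y; have := hf 1 x y; rewrite !scale1r. Qed.

Lemma homN (X Y : lmodType S) (f : X -> Y) : is_hom f -> forall x, f (- x) = - f x.
Proof.
move=> hf x; have := hf (-1) x 0; rewrite addr0 (hom0 hf) addr0 !scaleN1r //.
Qed.

Lemma homB (X Y : lmodType S) (f : X -> Y) : is_hom f -> forall x y, f (x - y) = f x - f y.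
Proof. by move=> hf x y; rewrite (homD hf) (homN hf). Qed.

Lemma hom_comp (X Y Z : lmodType S) (f : X -> Y) (g : Y -> Z) :
  is_hom f -> is_hom g -> is_hom (fun x => g (f x)).
Proof. by move=> hf hg a x y; rewrite hf hg. Qed.

Lemma hom_id (X : lmodType S) : is_hom (fun x : X => x).
Proof. by []. Qed.

Lemma inj_subinj (M N : lmodType S) : injective_mod M -> subinj M N.
Proof.
move=> IM C i mi f hf.
have [r [hr hri]] := IM M C i mi (fun x => x) (@hom_id M).
exists (fun c => f (r c)); split; first exact: hom_comp.
by move=> x; rewrite hri.
Qed.

Lemma inj_B (A B C : lmodType S) (f : A -> B) (g : B -> C) :
  short_exact f g -> injective_mod A -> injective_mod C -> injective_mod B.
Proof.
move=> [[hf injf] hg surj ex] IA IC.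
have [r [hr hrf]] := IA A B f (conj hf injf) (fun x => x) (@hom_id A).
have gf : forall a, g (f a) = 0 by move=> a; apply/ex; exists a.
have key : forall b b', g b = g b' -> b - f (r b) = b' - f (r b').
  move=> b b' e.
  have : g (b - b') = 0 by rewrite (homB hg) e subrr.
  move/ex => [a0 ea0].
  apply/eqP; rewrite -subr_eq0.
  have -> : b - f (r b) - (b' - f (r b')) = (b - b') - f (r (b - b')).
    by rewrite (homB hr) (homB hf) opprD addrACA -opprD.
  by rewrite -ea0 hrf subrr.
pose pick c := proj1_sig (constructive_indefinite_description _ (surj c)).
have pickP c : g (pick c) = c := proj2_sig (constructive_indefinite_description _ (surj c)).
pose s c := pick c - f (r (pick c)).
have sP : forall b, s (g b) = b - f (r b) by move=> b; apply: key; rewrite pickP.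
have hs : is_hom s.
  move=> a c c'.
  have -> : a *: c + c' = g (a *: pick c + pick c') by rewrite hg !pickP.
  rewrite sP hr hf /s; set u := pick c; set v := pick c'.
  by rewrite scalerBr opprD addrACA.
move=> X Y i mi phi hphi.
have [al [hal hali]] := IA X Y i mi (fun x => r (phi x)) (hom_comp hphi hr).
have [ga [hga hgai]] := IC X Y i mi (fun x => g (phi x)) (hom_comp hphi hg).
exists (fun y => f (al y) + s (ga y)); split.
  move=> a y y'; rewrite hal hga hf hs [in RHS]scalerDr.
  by rewrite addrACA.
by move=> x; rewrite hali hgai sP addrC subrK.
Qed.

End Aux.

Theorem mainTheorem18 (R : pzRingType) :
  no_subinj_middle_class R^c ->
  forall M : lmodType R^c, subinj_ext_reflecting M.
Proof.
move=> H M A B C f g se sMA sMC.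
case: (H A) => [IA|DA]; last by apply: inj_subinj; apply/DA.
case: (H C) => [IC|DC]; last by apply: inj_subinj; apply/DC.
have IB := inj_B se IA IC.
move=> D i mi phi hphi; exact: IB D i mi phi hphi.
Qed.
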